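(* Let $L$ be a distributive lattice with $|L|>1$. Then $L^*\setminus\{0\}$ is path connected, where $L^*\subseteq\mathbb R^L$ carries the product topology and $0$ denotes the constant zero homomorphism.
   Context: $L^*$ is the set of all lattice homomorphisms $x^*:L\to[-1,1]$, i.e. maps with $x^*(a\vee b)=\max\{x^*(a),x^*(b)\}$ and $x^*(a\wedge b)=\min\{x^*(a),x^*(b)\}$ for all $a,b\in L$; it is regarded as a subset of $\mathbb R^L$. *)

(* Defs.v *)
From HB Require Import structures.
From mathcomp Require Import all_boot all_order all_algebra.
From mathcomp Require Import all_classical all_reals all_analysis.
Set Implicit Arguments. Unset Strict Implicit. Unset Printing Implicit Defensive.
Import Order.TTheory GRing.Theory Num.Theory.
Import numFieldNormedType.Exports.
Local Open Scope classical_set_scope.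
Local Open Scope ring_scope.

Definition lattice_dual (d : Order.disp_t) (L : latticeType d) (R : realType)
  : set (L -> R) :=
  [set x | (forall a : L, -1 <= x a <= 1) /\
           (forall a b : L, x (Order.join a b) = Num.max (x a) (x b)) /\
           (forall a b : L, x (Order.meet a b) = Num.min (x a) (x b))].

Definition path_connected_set (R : realType) (T : topologicalType) (A : set T) :=
  forall x y, A x -> A y ->
    exists f : R -> T, {within `[0, 1], continuous f} /\
      f 0 = x /\ f 1 = y /\ f @` `[0, 1] `<=` A.

(* Main.v *)
Require Import Defs.
From HB Require Import structures.
From mathcomp Require Import all_boot all_order all_algebra.
From mathcomp Require Import all_classical all_reals all_analysis.
From mathcomp Require Import lra ring.
Import Order.TTheory GRing.Theory Num.Theory.
Import numFieldNormedType.Exports.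
Local Open Scope classical_set_scope.
Local Open Scope ring_scope.

Section Pieces.
Local Set Implicit Arguments.
Local Unset Strict Implicit.
Context (R : realType) (d : Order.disp_t) (L : latticeType d).

Definition piece (h : L -> R) (c u : R) : L -> R := fun z => (1 - u) * h z + u * c.

Lemma aff_max (al be p q : R) : 0 <= al ->
  Num.max (al * p + be) (al * q + be) = al * Num.max p q + be.
Proof.
move=> al0; have [pq|qp] := leP p q.
  by rewrite !max_r // lerD2r ler_wpM2l.
by rewrite !max_l // ?lerD2r ?ler_wpM2l // ltW.
Qed.

Lemma aff_min (al be p q : R) : 0 <= al ->
  Num.min (al * p + be) (al * q + be) = al * Num.min p q + be.
Proof.
move=> al0; have [pq|qp] := leP p q.
  by rewrite !min_l // lerD2r ler_wpM2l.
by rewrite !min_r // ?lerD2r ?ler_wpM2l // ltW.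
Qed.

Lemma piece_in (h : L -> R) (c u : R) :
  @lattice_dual d L R h -> (c = 1 \/ c = -1) -> (exists z, 0 < c * h z) -> 0 <= u <= 1 ->
  (@lattice_dual d L R `\` [set (fun _ : L => 0 : R)]) (piece h c u).
Proof.
move=> [hb [hj hm]] c1 [z cz] /andP[u0 u1]; split; [split; [|split]|].
- move=> a; have /andP[ha1 ha2] := hb a; rewrite /piece.
  by case: c1 => ->; apply/andP; split; nra.
- by move=> a b; rewrite /piece hj aff_max // subr_ge0.
- by move=> a b; rewrite /piece hm aff_min // subr_ge0.
- move=> /= /(congr1 (fun f => f z)); rewrite /piece => E.
  by case: c1 cz E => -> cz E; nra.
Qed.

Definition clamp (s : R) : R := Num.min 1 (Num.max 0 s).

Lemma clamp_cont : continuous clamp.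
Proof.
have -> : clamp = (cst 1 \min (cst 0 \max id)) by [].
apply: min_fun_continuous; first exact: cst_continuous.
apply: max_fun_continuous; [exact: cst_continuous|exact: (fun x => cvg_id)].
Qed.

Lemma clamp0 s : s <= 0 -> clamp s = 0.
Proof. by move=> s0; rewrite /clamp max_l // min_r. Qed.
Lemma clamp1 s : 1 <= s -> clamp s = 1.
Proof. by move=> s1; rewrite /clamp max_r ?min_l // (le_trans _ s1). Qed.
Lemma clampid s : 0 <= s <= 1 -> clamp s = s.
Proof. by move=> /andP[s0 s1]; rewrite /clamp max_r // min_r. Qed.
Lemma clamp01 s : 0 <= clamp s <= 1.
Proof.
rewrite /clamp; apply/andP; split.
  by rewrite le_min ler01 le_max lexx.
by rewrite ge_min lexx.
Qed.

End Pieces.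
Section PF.
Local Set Implicit Arguments.
Local Unset Strict Implicit.
Context (d : Order.disp_t) (L : distrLatticeType d).

Definition filt (Y : set L) :=
  (forall u v, Y u -> (u <= v)%O -> Y v) /\
  (forall u v, Y u -> Y v -> Y (Order.meet u v)).

Lemma prime_filter (a b : L) : ~ (a <= b)%O ->
  exists F : set L, F a /\ ~ F b /\ filt F /\
    (forall u v, F (Order.join u v) -> F u \/ F v).
Proof.
move=> nab.
pose Yf (X : set L) : set L := fun v => X v \/ (a <= v)%O.
pose P (X : set L) := filt (Yf X) /\ ~ Yf X b.
have [A [[[upA mA] nbA] maxA]] : exists A, P A /\ forall B, (A `<` B)%classic -> ~ P B.
  apply: Zorn_bigcup => F FP Ftot.
  set U := (\bigcup_(X in F) X)%classic.
  have YU : forall v, Yf U v -> (a <= v)%O \/ exists X, F X /\ Yf X v.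
    by move=> v [[X FX Xv]|av]; [right; exists X; split=> //; left|left].
  have UY : forall X v, F X -> Yf X v -> Yf U v.
    by move=> X v FX [Xv|av]; [left; exists X|right].
  split; [split|].
  - move=> u v /YU [au|[X [FX Xu]]] uv.
      by right; exact: le_trans uv.
    by apply: (UY X) => //; have [[upX _] _] := FP X FX; exact: upX uv.
  - move=> u v /YU [au|[X [FX Xu]]] /YU [av|[Y [FY Yv]]].
    + by right; rewrite lexI au av.
    + have [[_ +] _] := FP Y FY; move=> mY; apply: (UY Y) => //; apply: mY => //.
      by right.
    + have [[_ +] _] := FP X FX; move=> mX; apply: (UY X) => //; apply: mX => //.
      by right.
    + have [XY|YX] := Ftot X Y FX FY.
        have [[_ +] _] := FP Y FY; move=> mY; apply: (UY Y) => //; apply: mY => //.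
        by case: Xu => [/XY|]; [left|right].
      have [[_ +] _] := FP X FX; move=> mX; apply: (UY X) => //; apply: mX => //.
      by case: Yv => [/YX|]; [left|right].
  - move=> /YU [//|[X [FX Xb]]].
    by have [_ +] := FP X FX; apply.
exists (Yf A); split; first by right.
split=> //; split; first by [].
move=> x y Fxy; apply: contrapT => /not_orP [nx ny].
have key : forall z, ~ Yf A z -> exists f, Yf A f /\ (Order.meet f z <= b)%O.
  move=> z nz.
  pose G : set L := fun w => exists f, Yf A f /\ (Order.meet f z <= w)%O.
  have FG : forall w, Yf A w -> G w.
    by move=> w Aw; exists w; split => //; exact: leIl.
  have YG : forall w, Yf G w -> G w.
    by move=> w [//|aw]; apply: FG; right.
  suff : ~ ~ G b by move/contrapT.
  move=> nGb; apply: (maxA G).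
    split; first by move=> w Aw; apply: FG; left.
    move=> GA; apply: nz; have : G z by exists a; split; [right|exact: leIr].
    by move/GA; left.
  split; [split|].
  - move=> u v /YG [f [Af fu]] uv; left; exists f; split=> //; exact: le_trans uv.
  - move=> u v /YG [f [Af fu]] /YG [g [Ag gv]]; left.
    exists (Order.meet f g); split; first exact: mA.
    rewrite lexI; apply/andP; split.
      by apply: le_trans fu; apply: leI2 => //; exact: leIl.
    by apply: le_trans gv; apply: leI2 => //; exact: leIr.
  - by move=> /YG.
have [f [Af fb]] := key x nx.
have [g [Ag gb]] := key y ny.
apply: nbA; apply: (upA (Order.meet (Order.meet f g) (Order.join x y))).
  by apply: (mA) => //; apply: (mA).
rewrite meetUr leUx; apply/andP; split.
  by apply: le_trans fb; apply: leI2 => //; exact: leIl.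
by apply: le_trans gb; apply: leI2 => //; exact: leIr.
Qed.
End PF.
Lemma ptws_cont (R : realType) (L : Type) (g : R -> {ptws L -> R}) :
  (forall z : L, continuous (fun t => g t z)) -> continuous g.
Proof.
move=> H t; apply/cvg_sup => z.
have : continuous (g : R -> initial_topology (fun f : L -> R => f z)).
  by apply: continuous_comp_initial; exact: H.
exact.
Qed.

Theorem mainTheorem10 (R : realType) (d : Order.disp_t) (L : distrLatticeType d) :
  (exists a b : L, a != b) ->
  path_connected_set R
    (@setD {ptws L -> R} (@lattice_dual d L R) [set (fun _ : L => 0 : R)]).
Proof.
move=> [a0 [b0 ab]].
have [a [b nab]] : exists a b : L, ~ (a <= b)%O.
  have [h|h] := boolP (a0 <= b0)%O; last by exists a0, b0; apply/negP.
  exists b0, a0 => ba; move/negP: ab; apply; apply/eqP; apply: le_anti.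
  by rewrite h ba.
have [F [Fa [nFb [[upF mF] prF]]]] := prime_filter nab.
pose chi : L -> R := fun z => if `[< F z >] then 1 else -1.
have chiL : @lattice_dual d L R chi.
  split; [|split].
  - by move=> z; rewrite /chi; case: ifP => _; apply/andP; split; lra.
  - move=> u v; rewrite /chi.
    have [Fu|nFu] := pselect (F u); have [Fv|nFv] := pselect (F v).
    + have Fuv : F (Order.join u v) by apply: upF Fu _; exact: leUl.
      by rewrite (asboolT Fu) (asboolT Fv) (asboolT Fuv) maxxx.
    + have Fuv : F (Order.join u v) by apply: upF Fu _; exact: leUl.
      rewrite (asboolT Fu) (asboolF nFv) (asboolT Fuv) max_l //; lra.
    + have Fuv : F (Order.join u v) by apply: upF Fv _; exact: leUr.
      rewrite (asboolF nFu) (asboolT Fv) (asboolT Fuv) max_r //; lra.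
    + have Fuv : ~ F (Order.join u v) by case/prF.
      by rewrite (asboolF nFu) (asboolF nFv) (asboolF Fuv) maxxx.
  - move=> u v; rewrite /chi.
    have [Fu|nFu] := pselect (F u); have [Fv|nFv] := pselect (F v).
    + have Fuv : F (Order.meet u v) by apply: mF.
      by rewrite (asboolT Fu) (asboolT Fv) (asboolT Fuv) minxx.
    + have Fuv : ~ F (Order.meet u v) by move=> /upF /(_ (leIr v u)).
      rewrite (asboolT Fu) (asboolF nFv) (asboolF Fuv) min_r //; lra.
    + have Fuv : ~ F (Order.meet u v) by move=> /upF /(_ (leIl u v)).
      rewrite (asboolF nFu) (asboolT Fv) (asboolF Fuv) min_l //; lra.
    + have Fuv : ~ F (Order.meet u v) by move=> /upF /(_ (leIl u v)).
      by rewrite (asboolF nFu) (asboolF nFv) (asboolF Fuv) minxx.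
have chipos : forall c : R, c = 1 \/ c = -1 -> exists z, 0 < c * chi z.
  move=> c [->|->].
    by exists a; rewrite /chi asboolT // mul1r ltr01.
  by exists b; rewrite /chi asboolF // mulrNN mul1r ltr01.
have sgn : forall x : L -> R, (@lattice_dual d L R `\` [set (fun _ : L => 0 : R)]) x ->
    exists c : R, (c = 1 \/ c = -1) /\ exists z, 0 < c * x z.
  move=> x [_ x0].
  have [z xz] : exists z, x z != 0.
    apply: contrapT => nz; apply: x0; apply/funext => z /=.
    by apply/eqP; apply: contrapT => /negP xz; apply: nz; exists z.
  have [xp|xn] := ltP 0 (x z).
    by exists 1; split; [by left|exists z; rewrite mul1r].
  exists (-1); split; [by right|exists z].
  have xz' : x z < 0 by rewrite lt_neqAle xz xn.
  lra.
move=> x y Ax Ay.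
have [c1 [c1E c1p]] := sgn x Ax.
have [c2 [c2E c2p]] := sgn y Ay.
have [xL _] := Ax; have [yL _] := Ay.
pose s (k : R) (t : R) := clamp (4 * t - k).
have sc : forall k, continuous (s k).
  move=> k; have -> : s k = @clamp R \o (fun t => 4 * t - k) by [].
  move=> t; apply: continuous_comp; last exact: clamp_cont.
  apply: cvgB; last exact: cvg_cst.
  by apply: cvgM; [exact: cvg_cst|exact: cvg_id].
pose f (t : R) : L -> R := fun z => piece x c1 (s 0 t) z + piece chi c1 (1 - s 1 t) z
  + piece chi c2 (s 2 t) z + piece y c2 (1 - s 3 t) z - c1 - chi z - c2.
exists f; split; [|split; [|split]].
- apply: continuous_subspaceT; apply: ptws_cont => z.
  have -> : (fun t => f t z) = (fun t => x z + s 0 t * (c1 - x z) + s 1 t * (chi z - c1)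
      + s 2 t * (c2 - chi z) + s 3 t * (y z - c2)).
    by apply/funext => t; rewrite /f /piece; ring.
  move=> t; apply: cvgD; [apply: cvgD; [apply: cvgD; [apply: cvgD; [exact: cvg_cst|]|]|]|];
    (apply: cvgM; [exact: (sc _ _)|exact: cvg_cst]).
- apply/funext => z; rewrite /f /piece /s mulr0 !sub0r !clamp0 ?oppr_le0 ?ler0n //=.
  ring.
- apply/funext => z; rewrite /f /piece /s mulr1 !clamp1 ?subr0 //=; try lra.
- move=> w [t]; rewrite /= in_itv /= => /andP[t0 t1] <-.
  have [ta|ta] := leP t (1/4).
    have -> : f t = piece x c1 (s 0 t).
      apply/funext => z; rewrite /f /s (@clamp0 R (4 * t - 1)) ?(@clamp0 R (4 * t - 2))
        ?(@clamp0 R (4 * t - 3)); try lra.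
      rewrite /piece; ring.
    by apply: piece_in => //; exact: clamp01.
  have [tb|tb] := leP t (1/2).
    have -> : f t = piece chi c1 (1 - s 1 t).
      apply/funext => z; rewrite /f /s (@clamp1 R (4 * t - 0)) ?(@clamp0 R (4 * t - 2))
        ?(@clamp0 R (4 * t - 3)); try lra.
      rewrite /piece; ring.
    apply: piece_in => //; first exact: chipos.
    have /andP[? ?] := @clamp01 R (4 * t - 1).
    by rewrite /s; apply/andP; split; lra.
  have [tc|tc] := leP t (3/4).
    have -> : f t = piece chi c2 (s 2 t).
      apply/funext => z; rewrite /f /s (@clamp1 R (4 * t - 0)) ?(@clamp1 R (4 * t - 1))
        ?(@clamp0 R (4 * t - 3)); try lra.
      rewrite /piece; ring.
    by apply: piece_in => //; [exact: chipos|exact: clamp01].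
  have -> : f t = piece y c2 (1 - s 3 t).
    apply/funext => z; rewrite /f /s (@clamp1 R (4 * t - 0)) ?(@clamp1 R (4 * t - 1))
      ?(@clamp1 R (4 * t - 2)); try lra.
    rewrite /piece; ring.
  apply: piece_in => //.
  have /andP[? ?] := @clamp01 R (4 * t - 3).
  by rewrite /s; apply/andP; split; lra.
Qed.
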